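(* Let $T$ be the closed isosceles trapezoid in the Euclidean plane whose parallel sides have lengths $1100$ and $1000$ and whose two legs each have length $600$. Then there exist $510$ closed rectangles, each of size $40\times 30$, all contained in $T$ and with pairwise disjoint interiors.
   Context: Rectangles may be placed at any position and with any orientation in the plane (they need not be axis-parallel). This is the paper's packing solution to Alcuin's quadrangular city problem (a city with sides $1100$, $1000$, $600$, $600$ feet, houses $40\times 30$ feet), interpreting the city as an isosceles trapezium. *)

(* Defs.v *)
From Stdlib Require Import Reals Lra Lia.
Open Scope R_scope.

(* Height of the isosceles trapezium with parallel sides 1100, 1000 and
   legs 600: each leg projects horizontally onto (1100-1000)/2 = 50. *)
Definition trap_h : R := sqrt (600 ^ 2 - 50 ^ 2).

(* The closed isosceles trapezium with vertices
   (0,0), (1100,0), (1050,h), (50,h): intersection of the four closed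
   half-planes bounded by its side lines. *)
Definition in_trapezoid (x y : R) : Prop :=
  0 <= y /\ y <= trap_h /\
  50 * y <= trap_h * x /\ trap_h * x <= trap_h * 1100 - 50 * y.

(* The closed rectangle with corner (px,py), first side of length a in the
   unit direction (ux,uy) and second side of length b in the perpendicular
   direction (-uy,ux). *)
Definition in_rect (a b px py ux uy x y : R) : Prop :=
  exists s t, 0 <= s <= a /\ 0 <= t <= b /\
    x = px + s * ux - t * uy /\ y = py + s * uy + t * ux.

Definition in_rect_int (a b px py ux uy x y : R) : Prop :=
  exists s t, 0 < s < a /\ 0 < t < b /\
    x = px + s * ux - t * uy /\ y = py + s * uy + t * ux.

(* Main.v *)
Require Import Defs.
From Stdlib Require Import Reals Lra Lia ZArith List Bool.
Open Scope R_scope.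

Definition Wz (o : bool) : Z := if o then 40%Z else 30%Z.
Definition Hz (o : bool) : Z := if o then 30%Z else 40%Z.

Definition box := (Z * Z * bool)%type.

Fixpoint place (rows : list (Z * nat * Z)) (y : Z) (i : nat) : box :=
  match rows with
  | nil => (0%Z, 0%Z, true)
  | (hh, c, a) :: rs =>
      if Nat.ltb i c then ((a + Z.of_nat i * Wz (Z.eqb hh 30))%Z, y, Z.eqb hh 30)
      else place rs (y + hh)%Z (i - c)
  end.

Definition rows : list (Z * nat * Z) :=
  (30%Z,27%nat,10%Z) :: (30%Z,27%nat,10%Z) :: (30%Z,27%nat,10%Z) ::
  (40%Z,35%nat,25%Z) :: (40%Z,35%nat,25%Z) :: (40%Z,35%nat,25%Z) :: (40%Z,35%nat,25%Z) :: (40%Z,35%nat,25%Z) ::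
  (30%Z,26%nat,30%Z) :: (30%Z,26%nat,30%Z) ::
  (40%Z,34%nat,40%Z) :: (40%Z,34%nat,40%Z) :: (40%Z,34%nat,40%Z) ::
  (30%Z,25%nat,50%Z) :: (30%Z,25%nat,50%Z) :: (30%Z,25%nat,50%Z) :: (30%Z,25%nat,50%Z) :: nil.

Definition boxes : list box := map (place rows 0%Z) (seq 0 510).

Definition sepb (b1 b2 : box) : bool :=
  let '(x1, y1, o1) := b1 in let '(x2, y2, o2) := b2 in
  (Z.leb (x1 + Wz o1) x2 || Z.leb (x2 + Wz o2) x1 ||
   Z.leb (y1 + Hz o1) y2 || Z.leb (y2 + Hz o2) y1)%bool.

Definition containb (b : box) : bool :=
  let '(x, y, o) := b in
  (Z.leb 0 y && Z.leb (y + Hz o) 590 && Z.leb (500 * (y + Hz o)) (5979 * x) &&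
   Z.leb (500 * (y + Hz o)) (5979 * (1100 - (x + Wz o))))%bool.

Fixpoint check_list (l : list box) : bool :=
  match l with
  | nil => true
  | b :: r => (forallb (sepb b) r && check_list r)%bool
  end.

Lemma check_ok : check_list boxes = true.
Proof. vm_compute. reflexivity. Qed.

Lemma contain_ok : forallb containb boxes = true.
Proof. vm_compute. reflexivity. Qed.

Lemma boxes_len : length boxes = 510%nat.
Proof. reflexivity. Qed.

Definition d0 : box := (0%Z, 0%Z, true).

Lemma check_nth : forall l i j, check_list l = true -> (i < j < length l)%nat ->
  sepb (nth i l d0) (nth j l d0) = true.
Proof.
  induction l as [|b r IH]; simpl; intros i j Hc Hij; [lia|].
  apply andb_true_iff in Hc as [Hf Hc].
  destruct i as [|i]; destruct j as [|j]; try lia.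
  - rewrite forallb_forall in Hf. apply Hf. apply nth_In. lia.
  - apply IH; auto; lia.
Qed.

Definition bx (i : nat) : box := nth i boxes d0.
Definition pxb (b : box) : R := let '(x, y, o) := b in if o then IZR x else IZR x + 30.
Definition pyb (b : box) : R := let '(x, y, o) := b in IZR y.
Definition uxb (b : box) : R := let '(x, y, o) := b in if o then 1 else 0.
Definition uyb (b : box) : R := let '(x, y, o) := b in if o then 0 else 1.

Lemma rect_box : forall x0 y0 o x y,
  in_rect 40 30 (pxb (x0, y0, o)) (pyb (x0, y0, o)) (uxb (x0, y0, o)) (uyb (x0, y0, o)) x y ->
  IZR x0 <= x <= IZR x0 + IZR (Wz o) /\ IZR y0 <= y <= IZR y0 + IZR (Hz o).
Proof.
  intros x0 y0 o x y [s [t [Hs [Ht [Hx Hy]]]]]; destruct o; simpl in *; subst; lra.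
Qed.

Lemma rect_int_box : forall x0 y0 o x y,
  in_rect_int 40 30 (pxb (x0, y0, o)) (pyb (x0, y0, o)) (uxb (x0, y0, o)) (uyb (x0, y0, o)) x y ->
  IZR x0 < x < IZR x0 + IZR (Wz o) /\ IZR y0 < y < IZR y0 + IZR (Hz o).
Proof.
  intros x0 y0 o x y [s [t [Hs [Ht [Hx Hy]]]]]; destruct o; simpl in *; subst; lra.
Qed.

Lemma h_bounds : 5979 / 10 <= trap_h.
Proof.
  unfold trap_h.
  rewrite <- (sqrt_square (5979/10)) by lra.
  apply sqrt_le_1_alt. lra.
Qed.

Lemma Zle_R : forall a b, Z.leb a b = true -> IZR a <= IZR b.
Proof. intros a b H. apply IZR_le. apply Z.leb_le. exact H. Qed.

Lemma sep_real : forall b1 b2 x y, sepb b1 b2 = true ->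
  ~ (in_rect_int 40 30 (pxb b1) (pyb b1) (uxb b1) (uyb b1) x y /\
     in_rect_int 40 30 (pxb b2) (pyb b2) (uxb b2) (uyb b2) x y).
Proof.
  intros [[x1 y1] o1] [[x2 y2] o2] x y Hs [H1 H2].
  apply rect_int_box in H1. apply rect_int_box in H2.
  unfold sepb in Hs.
  repeat (apply orb_true_iff in Hs; destruct Hs as [Hs|Hs]);
  apply Zle_R in Hs; rewrite plus_IZR in Hs; lra.
Qed.

Lemma contain_real : forall b x y, containb b = true ->
  in_rect 40 30 (pxb b) (pyb b) (uxb b) (uyb b) x y -> in_trapezoid x y.
Proof.
  intros [[x0 y0] o] x y Hc Hr.
  apply rect_box in Hr.
  unfold containb in Hc.
  apply andb_true_iff in Hc as [Hc H4].
  apply andb_true_iff in Hc as [Hc H3].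
  apply andb_true_iff in Hc as [H1 H2].
  apply Zle_R in H1, H2, H3, H4.
  rewrite !plus_IZR in H2. rewrite !mult_IZR, !plus_IZR in H3. rewrite !mult_IZR, !minus_IZR, !plus_IZR in H4.
  pose proof h_bounds as Hh.
  set (W := IZR (Wz o)) in *. set (H := IZR (Hz o)) in *.
  set (h := trap_h) in *.
  unfold in_trapezoid. fold h.
  assert (HH : 0 <= H) by (unfold H; destruct o; simpl; lra).
  assert (HX : 0 <= IZR x0) by lra.
  assert (HX2 : 0 <= 1100 - (IZR x0 + W)) by lra.
  assert (E1 : 5979/10 * IZR x0 <= h * IZR x0) by (apply Rmult_le_compat_r; lra).
  assert (E2 : 5979/10 * (1100 - (IZR x0 + W)) <= h * (1100 - (IZR x0 + W)))
    by (apply Rmult_le_compat_r; lra).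
  assert (E3 : h * IZR x0 <= h * x) by (apply Rmult_le_compat_l; lra).
  assert (E4 : h * x <= h * (IZR x0 + W)) by (apply Rmult_le_compat_l; lra).
  repeat split; lra.
Qed.

Theorem mainTheorem1 :
  exists px py ux uy : nat -> R,
    (forall i, (i < 510)%nat ->
       ux i ^ 2 + uy i ^ 2 = 1 /\
       (forall x y, in_rect 40 30 (px i) (py i) (ux i) (uy i) x y ->
                    in_trapezoid x y)) /\
    (forall i j, (i < 510)%nat -> (j < 510)%nat -> i <> j ->
       forall x y,
         ~ (in_rect_int 40 30 (px i) (py i) (ux i) (uy i) x y /\
            in_rect_int 40 30 (px j) (py j) (ux j) (uy j) x y)).
Proof.
  exists (fun i => pxb (bx i)), (fun i => pyb (bx i)),
         (fun i => uxb (bx i)), (fun i => uyb (bx i)).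
  split.
  - intros i Hi. split.
    + destruct (bx i) as [[? ?] o]; destruct o; simpl; lra.
    + intros x y; apply contain_real.
      pose proof contain_ok as C. rewrite forallb_forall in C.
      apply C. unfold bx. apply nth_In. rewrite boxes_len. exact Hi.
  - intros i j Hi Hj Hij x y.
    destruct (Nat.lt_gt_cases i j) as [[Hlt|Hlt] _]; [exact Hij| |].
    + apply sep_real. apply check_nth. apply check_ok. rewrite boxes_len. lia.
    + intros [A B]. apply (sep_real (bx j) (bx i) x y).
      * apply check_nth. apply check_ok. rewrite boxes_len. lia.
      * split; assumption.
Qed.
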